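(* Let $A\in\mathbb R^{m\times n}$, $D\in\mathbb R^{r\times n}$, $a\in\mathbb R^m$, $\lambda,\mu\in\mathbb R^r$ with $\lambda,\mu>0$, and let $\Omega$ be either $\mathbb R^n_+$ or $\{x:0\le x\le\gamma\}$ for some $\gamma\in\mathbb R^n$ with $\gamma>0$. Then the primal problem $$\min_{x\in\Omega}\ \tfrac12\|Ax-a\|^2+\sum_{i=1}^r\lambda_i\mathbf 1_{\{(Dx)_i\neq0\}}$$ has a global minimizer, and the corresponding dual problem has a global minimizer, where the dual problem is $$\min_{y\in\mathbb R^m,z\in\mathbb R^r}\ \big\langle\max\{-A^\top y-D^\top z,0\},\gamma\big\rangle+\tfrac12\|y\|^2+\langle a,y\rangle+\Psi_{0,\mu}(z)$$ when $\Omega=\{x:0\le x\le\gamma\}$ (max taken componentwise), and $$\min_{y\in\mathbb R^m,z\in\mathbb R^r}\ \tfrac12\|y\|^2+\langle a,y\rangle+\Psi_{0,\mu}(z)\quad\text{s.t.}\quad A^\top y+D^\top z\ge0$$ when $\Omega=\mathbb R^n_+$.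
   Context: $\Psi_{0,\mu}(z)=\sum_{i=1}^r\mu_i\mathbf 1_{\{z_i\ne0\}}$, where $\mathbf 1_{\{\cdot\}}$ is $1$ if the condition holds and $0$ otherwise. Vector inequalities are componentwise. *)

(* Defs.v *)
From mathcomp Require Import all_boot all_order all_algebra.
From mathcomp Require Import reals.
Set Implicit Arguments. Unset Strict Implicit. Unset Printing Implicit Defensive.
Import Order.TTheory GRing.Theory Num.Theory.
Local Open Scope ring_scope.

Section Defs.
Variable R : realType.

Definition dotv (k : nat) (u v : 'cV[R]_k) : R := \sum_(i < k) u i 0 * v i 0.
Definition sqnorm (k : nat) (u : 'cV[R]_k) : R := dotv u u.

Definition vle (k : nat) (u v : 'cV[R]_k) : Prop := forall i, u i 0 <= v i 0.
Definition vlt (k : nat) (u v : 'cV[R]_k) : Prop := forall i, u i 0 < v i 0.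

Definition vpos (k : nat) (u : 'cV[R]_k) : 'cV[R]_k := \col_i Num.max (u i 0) 0.

Definition Psi0 (r : nat) (mu z : 'cV[R]_r) : R :=
  \sum_(i < r) mu i 0 * (z i 0 != 0)%:R.

Definition primal_obj (m n r : nat) (A : 'M[R]_(m, n)) (D : 'M[R]_(r, n))
  (a : 'cV[R]_m) (lambda : 'cV[R]_r) (x : 'cV[R]_n) : R :=
  2^-1 * sqnorm (A *m x - a) + Psi0 lambda (D *m x).

Definition dual_obj_box (m n r : nat) (A : 'M[R]_(m, n)) (D : 'M[R]_(r, n))
  (a : 'cV[R]_m) (mu : 'cV[R]_r) (gamma : 'cV[R]_n) (y : 'cV[R]_m) (z : 'cV[R]_r) : R :=
  dotv (vpos (- (A^T *m y) - D^T *m z)) gamma + 2^-1 * sqnorm y + dotv a y + Psi0 mu z.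

(* dual objective for Omega = R^n_+ (constraint A^T y + D^T z >= 0 imposed separately) *)
Definition dual_obj_nonneg (m r : nat) (a : 'cV[R]_m) (mu : 'cV[R]_r)
  (y : 'cV[R]_m) (z : 'cV[R]_r) : R :=
  2^-1 * sqnorm y + dotv a y + Psi0 mu z.

Definition has_global_min (T : Type) (S : T -> Prop) (f : T -> R) : Prop :=
  exists x, S x /\ forall x', S x' -> f x <= f x'.

End Defs.

(* Main.v *)
Require Import Defs.
From mathcomp Require Import all_boot all_order all_algebra.
From mathcomp Require Import reals.
From mathcomp Require Import ring lra.
From Stdlib Require Classical.
Import Order.TTheory GRing.Theory Num.Theory.
Local Open Scope ring_scope.
Set Implicit Arguments. Unset Strict Implicit. Unset Printing Implicit Defensive.

Section Basics.
Variable R : realType.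
Implicit Types (k : nat).

Lemma dotvE k (u v : 'cV[R]_k) : dotv u v = (u^T *m v) 0 0.
Proof. by rewrite /dotv mxE; apply: eq_bigr => i _; rewrite mxE. Qed.

Lemma dotvC k (u v : 'cV[R]_k) : dotv u v = dotv v u.
Proof. by rewrite /dotv; apply: eq_bigr => i _; rewrite mulrC. Qed.

Lemma dotvDr k (u v w : 'cV[R]_k) : dotv u (v + w) = dotv u v + dotv u w.
Proof. by rewrite /dotv -big_split; apply: eq_bigr => i _; rewrite mxE mulrDr. Qed.

Lemma dotvDl k (u v w : 'cV[R]_k) : dotv (v + w) u = dotv v u + dotv w u.
Proof. by rewrite dotvC dotvDr !(dotvC u). Qed.

Lemma dotvZr k (t : R) (u v : 'cV[R]_k) : dotv u (t *: v) = t * dotv u v.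
Proof. by rewrite /dotv mulr_sumr; apply: eq_bigr => i _; rewrite mxE mulrCA. Qed.

Lemma dotvZl k (t : R) (u v : 'cV[R]_k) : dotv (t *: v) u = t * dotv v u.
Proof. by rewrite dotvC dotvZr dotvC. Qed.

Lemma dotv0r k (u : 'cV[R]_k) : dotv u 0 = 0.
Proof. by rewrite /dotv big1 // => i _; rewrite mxE mulr0. Qed.

Lemma dotv0l k (u : 'cV[R]_k) : dotv 0 u = 0.
Proof. by rewrite dotvC dotv0r. Qed.

Lemma dotvNr k (u v : 'cV[R]_k) : dotv u (- v) = - dotv u v.
Proof. by rewrite -scaleN1r dotvZr mulN1r. Qed.

Lemma dotvNl k (u v : 'cV[R]_k) : dotv (- v) u = - dotv v u.
Proof. by rewrite dotvC dotvNr dotvC. Qed.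

Lemma dotv_mul k l (u : 'cV[R]_k) (B : 'M[R]_(k, l)) (w : 'cV[R]_l) :
  dotv u (B *m w) = dotv (B^T *m u) w.
Proof. by rewrite !dotvE trmx_mul trmxK mulmxA. Qed.

Lemma sqnorm_ge0 k (u : 'cV[R]_k) : 0 <= sqnorm u.
Proof. by rewrite /sqnorm /dotv sumr_ge0 // => i _; rewrite -expr2 sqr_ge0. Qed.

Lemma sqnorm_eq0 k (u : 'cV[R]_k) : sqnorm u = 0 -> u = 0.
Proof.
move=> h; apply/matrixP => i j; rewrite (ord1 j) mxE.
have hn : forall i : 'I_k, predT i -> 0 <= u i 0 * u i 0 by move=> i0 _; rewrite -expr2 sqr_ge0.
have := @psumr_eq0P R _ predT (fun i => u i 0 * u i 0) hn h i isT.
by move/eqP; rewrite mulf_eq0 orbb => /eqP.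
Qed.

Lemma sqnormD k (x y : 'cV[R]_k) :
  sqnorm (x + y) = sqnorm x + 2 * dotv x y + sqnorm y.
Proof.
rewrite /sqnorm !dotvDr !dotvDl (dotvC y x); ring.
Qed.

Lemma sqnormZ k (t : R) (y : 'cV[R]_k) : sqnorm (t *: y) = t ^+ 2 * sqnorm y.
Proof. by rewrite /sqnorm dotvZr dotvZl mulrA expr2. Qed.


Definition quadf k p (M : 'M[R]_(p, k)) (v : 'cV[R]_p) (c : 'cV[R]_k) (e : R)
  (w : 'cV[R]_k) : R := 2^-1 * sqnorm (M *m w + v) + dotv c w + e.

Definition is_quad k (F : 'cV[R]_k -> R) : Prop :=
  exists p (M : 'M[R]_(p, k)) v c e, forall w, F w = quadf M v c e w.

Definition is_poly k (S : 'cV[R]_k -> Prop) : Prop :=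
  exists q (G : 'M[R]_(q, k)) h, forall w, S w <-> vle (G *m w) h.

Lemma quad_line k p (M : 'M[R]_(p, k)) v c e w d (u : R) :
  quadf M v c e (w + u *: d) = quadf M v c e w
    + u * (dotv (M *m d) (M *m w + v) + dotv c d) + 2^-1 * u ^+ 2 * sqnorm (M *m d).
Proof.
rewrite /quadf mulmxDr -scalemxAr.
have -> : M *m w + u *: (M *m d) + v = (M *m w + v) + u *: (M *m d) by rewrite addrAC.
rewrite sqnormD sqnormZ dotvDr !dotvZr (dotvC (M *m w + v)).
by field.
Qed.

Lemma quad_comp k l (F : 'cV[R]_k -> R) (w0 : 'cV[R]_k) (B : 'M[R]_(k, l)) :
  is_quad F -> is_quad (fun u => F (w0 + B *m u)).
Proof.
case=> p [M [v [c [e hF]]]].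
exists p, (M *m B), (M *m w0 + v), (B^T *m c), (dotv c w0 + e) => u.
rewrite hF /quadf mulmxDr dotvDr dotv_mul mulmxA (addrC (M *m w0)) addrA.
rewrite !addrA; ring.
Qed.

Lemma vleP k (u v : 'cV[R]_k) : vle u v <-> vle (u - v) 0.
Proof.
split=> h i; move: (h i); rewrite !mxE; first by rewrite subr_le0.
by rewrite subr_le0.
Qed.

Lemma poly_le k q (G : 'M[R]_(q, k)) h : is_poly (fun w => vle (G *m w) h).
Proof. by exists q, G, h. Qed.

Lemma poly_preimage k l (S : 'cV[R]_k -> Prop) (w0 : 'cV[R]_k) (B : 'M[R]_(k, l)) :
  is_poly S -> is_poly (fun u => S (w0 + B *m u)).
Proof.
case=> q [G [h hS]]; exists q, (G *m B), (h - G *m w0) => u.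
rewrite hS mulmxDr -mulmxA.
split=> H i; move: (H i); rewrite !mxE; lra.
Qed.

Lemma poly_inter k (S1 S2 : 'cV[R]_k -> Prop) :
  is_poly S1 -> is_poly S2 -> is_poly (fun w => S1 w /\ S2 w).
Proof.
case=> q1 [G1 [h1 H1]] [q2 [G2 [h2 H2]]].
exists (q1 + q2)%N, (col_mx G1 G2), (col_mx h1 h2) => w.
rewrite H1 H2 mul_col_mx; split.
  move=> [a b] i; case: (split_ordP i) => j ->; rewrite ?col_mxEu ?col_mxEd; [exact: a | exact: b].
move=> H; split=> j; [move: (H (lshift q2 j)) | move: (H (rshift q1 j))];
  by rewrite ?col_mxEu ?col_mxEd.
Qed.

Lemma poly_eq k q (G : 'M[R]_(q, k)) h : is_poly (fun w => G *m w = h).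
Proof.
have [q' [G' [h' H]]] := poly_inter (poly_le G h) (poly_le (- G) (- h)).
exists q', G', h' => w; rewrite -H; split.
  by move=> E; split=> i; rewrite ?mulNmx E.
case=> a b; apply/matrixP => i j; rewrite (ord1 j); apply/eqP; rewrite eq_le a /=.
by move: (b i); rewrite mulNmx !mxE lerN2.
Qed.


Lemma entryDZ k (x y : 'cV[R]_k) (s : R) i : (x + s *: y) i 0 = x i 0 + s * y i 0.
Proof. by rewrite !mxE. Qed.

Lemma exit_pt k q (G : 'M[R]_(q, k)) h w d :
  vle (G *m w) h -> ~ vle (G *m (w + d)) h ->
  exists s (j : 'I_q), [/\ 0 <= s, s < 1, 0 < (G *m d) j 0,
     vle (G *m (w + s *: d)) h & (G *m (w + s *: d)) j 0 = h j 0].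
Proof.
move=> Pw nPd.
have [i0 Hi0] := Classical_Pred_Type.not_all_ex_not _ _ nPd.
have Hi0' : h i0 0 < (G *m w) i0 0 + (G *m d) i0 0.
  by move: Hi0; rewrite mulmxDr mxE; move/negP; rewrite -ltNge.
have Pi0 : 0 < (G *m d) i0 0 by have := Pw i0; lra.
pose rat j := (h j 0 - (G *m w) j 0) / (G *m d) j 0.
case: (@arg_minP _ _ _ i0 (fun j => 0 < (G *m d) j 0) rat Pi0) => j Pj Hj.
have Ej : forall s, (G *m (w + s *: d)) = G *m w + s *: (G *m d).
  by move=> s; rewrite mulmxDr scalemxAr.
have ratj : rat j * (G *m d) j 0 = h j 0 - (G *m w) j 0.
  by rewrite /rat mulfVK // gt_eqF.
have r0 : 0 <= rat j by rewrite /rat divr_ge0 // ?subr_ge0 // ltW.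
exists (rat j), j; split => //.
- have := Hj i0 Pi0; rewrite /= /rat => hle.
  apply: (le_lt_trans hle); rewrite ltr_pdivrMr // mul1r; lra.
- move=> i; rewrite Ej entryDZ; have Pwi := Pw i.
  have [gi|gi] := ltP 0 ((G *m d) i 0).
    have := Hj i gi; rewrite /= {2}/rat ler_pdivlMr // => hle.
    lra.
  nra.
- rewrite Ej entryDZ ratj; lra.
Qed.

Lemma select (I : eqType) (X : Type) (s : seq I) (P Q : I -> X -> Prop) (V : I -> X -> R) :
  (forall j, j \in s -> (exists y, P j y) ->
     exists x, Q j x /\ forall y, P j y -> V j x <= V j y) ->
  (exists j y, j \in s /\ P j y) ->
  exists j x, [/\ j \in s, Q j x & forall j' y, j' \in s -> P j' y -> V j x <= V j' y].
Proof.
elim: s => [|j0 s IH] Hs [j [y [js Py]]]; first by [].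
have Hs' : forall j, j \in s -> (exists y, P j y) ->
   exists x, Q j x /\ forall y, P j y -> V j x <= V j y.
  by move=> j1 j1s; apply: Hs; rewrite in_cons j1s orbT.
have [Ht|Ht] := Classical_Prop.classic (exists j y, j \in s /\ P j y).
  have [j1 [x1 [j1s Qx1 Hx1]]] := IH Hs' Ht.
  have [Hh|Hh] := Classical_Prop.classic (exists y, P j0 y).
    have [x0 [Qx0 Hx0]] := Hs j0 (mem_head _ _) Hh.
    have [le10|le01] := leP (V j1 x1) (V j0 x0).
      exists j1, x1; split => //; first by rewrite in_cons j1s orbT.
      move=> j' y'; rewrite in_cons => /orP[/eqP ->|j's] Py'; last exact: Hx1.
      exact: le_trans le10 (Hx0 _ Py').
    exists j0, x0; split => //; first exact: mem_head.
    move=> j' y'; rewrite in_cons => /orP[/eqP ->|j's] Py'; first exact: Hx0.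
    exact: le_trans (ltW le01) (Hx1 _ _ j's Py').
  exists j1, x1; split => //; first by rewrite in_cons j1s orbT.
  move=> j' y'; rewrite in_cons => /orP[/eqP ->|j's] Py'; last exact: Hx1.
  by case: Hh; exists y'.
have Hh : exists y, P j0 y.
  move: js; rewrite in_cons => /orP[/eqP <-|js]; first by exists y.
  by case: Ht; exists j, y.
have [x0 [Qx0 Hx0]] := Hs j0 (mem_head _ _) Hh.
exists j0, x0; split => //; first exact: mem_head.
move=> j' y'; rewrite in_cons => /orP[/eqP ->|j's] Py'; first exact: Hx0.
by case: Ht; exists j', y'.
Qed.

End Basics.

Section HP.
Variable R : realType.

Definition hpB n (g : 'cV[R]_n.+1) (i : 'I_n.+1) : 'M[R]_(n.+1, n) :=
  \matrix_(a, l) (if a == i then - g (lift i l) 0 / g i 0 else (a == lift i l)%:R).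
Definition hpw0 n (g : 'cV[R]_n.+1) (i : 'I_n.+1) (b : R) : 'cV[R]_n.+1 :=
  (b / g i 0) *: delta_mx i 0.

Lemma hp_surj n (g : 'cV[R]_n.+1) i b w : g i 0 != 0 -> dotv g w = b ->
  w = hpw0 g i b + hpB g i *m \col_l w (lift i l) 0.
Proof.
move=> gi0 <-; apply/matrixP => a z; rewrite (ord1 z) !mxE.
case: (unliftP i a) => [l ->|->].
  rewrite eq_sym (negbTE (neq_lift _ _)) /= mulr0 add0r.
  rewrite (bigD1 l) //= !mxE eq_sym (negbTE (neq_lift _ _)) eqxx mul1r big1 ?addr0 //.
  move=> l' nl; rewrite !mxE eq_sym (negbTE (neq_lift _ _)) (inj_eq lift_inj) eq_sym (negbTE nl).
  by rewrite mul0r.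
rewrite !eqxx mulr1 /dotv (bigD1_ord i) //=.
have -> : \sum_(j < n) hpB g i i j * (\col_l w (lift i l) 0) j 0 =
   - (\sum_(i0 < n) g (lift i i0) 0 * w (lift i i0) 0) / g i 0.
  rewrite mulNr mulr_suml -sumrN; apply: eq_bigr => l _; rewrite !mxE eqxx.
  by field.
by field.
Qed.

Lemma dotv_delta n (g : 'cV[R]_n) i : dotv g (delta_mx i 0) = g i 0.
Proof.
rewrite /dotv (bigD1 i) //= !mxE !eqxx mulr1 big1 ?addr0 // => j nj.
by rewrite !mxE (negbTE nj) mulr0.
Qed.

Lemma dotv_row q k (G : 'M[R]_(q, k)) j w : dotv (row j G)^T w = (G *m w) j 0.
Proof. by rewrite dotvE trmxK -row_mul mxE. Qed.


Lemma qp_min n : forall (F : 'cV[R]_n -> R) (S : 'cV[R]_n -> Prop),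
  is_quad F -> is_poly S -> (exists w, S w) -> (exists L, forall w, S w -> L <= F w) ->
  exists x, S x /\ forall w, S w -> F x <= F w.
Proof.
elim: n => [|n IH] F S qF pS [w0 Sw0] [L HL].
  by exists w0; split=> // w Sw; have -> : w = w0 by apply/matrixP => -[]...
have Hhp : forall (g : 'cV[R]_n.+1) b, (exists i, g i 0 != 0) ->
    (exists y, S y /\ dotv g y = b) ->
    exists x, S x /\ forall y, S y -> dotv g y = b -> F x <= F y.
  move=> g b [i gi] [y0 [Sy0 Hy0]].
  pose phi u := hpw0 g i b + hpB g i *m u.
  have ne : exists u, S (phi u).
    by exists (\col_l y0 (lift i l) 0); rewrite /phi -hp_surj.
  have [u [Su Hu]] := IH (fun u => F (phi u)) (fun u => S (phi u))
     (quad_comp _ _ qF) (poly_preimage _ _ pS) ne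
     (ex_intro _ L (fun u Su => HL _ Su)).
  exists (phi u); split => // y Sy Hy.
  have Ey := hp_surj gi Hy.
  by rewrite Ey; apply: Hu; rewrite /phi -Ey.
case: pS => q [G [h HS]].
case: qF => p [M [v [c [e HF]]]].
pose e0 : 'cV[R]_n.+1 := delta_mx 0 0.
pose al := sqnorm (M *m e0).
pose be w := dotv (M *m e0) (M *m w + v) + dotv c e0.
have Fl : forall w u, F (w + u *: e0) = F w + u * be w + 2^-1 * u ^+ 2 * al.
  by move=> w u; rewrite !HF quad_line.
pose g2 := M^T *m (M *m e0).
pose b2 := - (dotv (M *m e0) v + dotv c e0).
pose hs := (e0, 0) :: (g2, b2) :: [seq ((row j G)^T, h j 0) | j <- enum 'I_q].
pose P (j : 'cV[R]_n.+1 * R) y := S y /\ dotv j.1 y = j.2 /\ exists i, j.1 i 0 != 0.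
have face : forall w d, S w -> ~ S (w + d) ->
    exists y s, [/\ 0 <= s, s < 1, y = w + s *: d & exists j, j \in hs /\ P j y].
  move=> w d Sw nSd; rewrite HS in Sw.
  have nSd' : ~ vle (G *m (w + d)) h by rewrite -HS.
  have [s [j [s0 s1 gd Sy Ey]]] := exit_pt Sw nSd'.
  exists (w + s *: d), s; split => //; exists ((row j G)^T, h j 0); split.
    rewrite !in_cons; apply/orP; right; apply/orP; right; apply/mapP; exists j => //.
    by rewrite mem_enum.
  split; first by rewrite HS.
  split; first by rewrite /= dotv_row.
  case: (boolP [exists i, G j i != 0]) => [/existsP [i gi]|].
    by exists i; rewrite !mxE.
  rewrite negb_exists => /forallP H0; exfalso; move: gd; rewrite mxE big1 ?ltxx // => i _.
  by move: (H0 i); rewrite negbK => /eqP ->; rewrite mul0r.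
have dom : forall w, S w -> exists y, (exists j, j \in hs /\ P j y) /\ F y <= F w.
  move=> w Sw.
  have a0 : 0 <= al := sqnorm_ge0 _.
  have [apos|az] := ltP 0 al.
    pose t := - be w / al.
    have ta : t * al = - be w by rewrite /t mulfVK ?gt_eqF.
    have eb : be w = - (t * al) by rewrite ta opprK.
    case: (Classical_Prop.classic (S (w + t *: e0))) => [Sy|nSy].
      exists (w + t *: e0); split.
        exists (g2, b2); split; first by rewrite !in_cons eqxx orbT.
        split => //; split.
          rewrite /= /g2 -dotv_mul mulmxDr -scalemxAr dotvDr dotvZr /b2.
          have : be w = dotv (M *m e0) (M *m w) + dotv (M *m e0) v + dotv c e0
            by rewrite /be dotvDr.
          rewrite /al /sqnorm in ta *; lra.
        exists 0; rewrite -(dotv_delta g2 0) /g2 -dotv_mul.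
        by rewrite gt_eqF.
      rewrite Fl eb.
      have : 0 <= t ^+ 2 * al by rewrite mulr_ge0 // sqr_ge0.
      rewrite -addrA; have -> : t * - (t * al) + 2^-1 * t ^+ 2 * al = - (2^-1 * (t ^+ 2 * al)) by field.
      lra.
    have [y [s [s0 s1 -> Hj]]] := face w (t *: e0) Sw nSy.
    exists (w + s *: (t *: e0)); split => //.
    rewrite scalerA Fl eb -addrA.
    have X0 : 0 <= s * (t ^+ 2 * al) by rewrite mulr_ge0 // mulr_ge0 // sqr_ge0.
    have -> : s * t * - (t * al) + 2^-1 * (s * t) ^+ 2 * al
       = (s * (t ^+ 2 * al)) * (2^-1 * s - 1) by ring.
    have : (s * (t ^+ 2 * al)) * (2^-1 * s - 1) <= 0 by rewrite mulr_ge0_le0 //; lra.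
    lra.
  have al0 : al = 0 by apply/eqP; rewrite eq_le az a0.
  have Me0 : M *m e0 = 0 by apply: sqnorm_eq0.
  have Fl0 : forall w u, F (w + u *: e0) = F w + u * dotv c e0.
    by move=> w' u; rewrite Fl al0 /be Me0 dotv0l add0r mulr0 addr0.
  have [g0|gn0] := eqVneq (dotv c e0) 0.
    pose d := (- w 0 0) *: e0.
    case: (Classical_Prop.classic (S (w + d))) => [Sy|nSy].
      exists (w + d); split; last by rewrite Fl0 g0 mulr0 addr0.
      exists (e0, 0); split; first exact: mem_head.
      split => //; split.
        rewrite /= dotvC dotv_delta /d entryDZ /e0 mxE !eqxx; by rewrite mulr1 subrr.
      by exists 0; rewrite /= /e0 mxE !eqxx oner_eq0.
    have [y [s [s0 s1 -> Hj]]] := face w d Sw nSy.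
    exists (w + s *: d); split => //.
    by rewrite /d scalerA Fl0 g0 mulr0 addr0.
  pose T := - (F w - L + 1) / dotv c e0.
  have Tg : T * dotv c e0 = - (F w - L + 1) by rewrite /T mulfVK.
  have nSy : ~ S (w + T *: e0).
    by move=> /HL; rewrite Fl0 Tg; lra.
  have [y [s [s0 s1 -> Hj]]] := face w (T *: e0) Sw nSy.
  exists (w + s *: (T *: e0)); split => //.
  rewrite scalerA Fl0 -mulrA Tg.
  have := HL w Sw; nra.
have H1 : forall j, j \in hs -> (exists y, P j y) ->
    exists x, S x /\ forall y, P j y -> F x <= F y.
  move=> j _ [y [Sy [Hy Hnz]]].
  have [x [Sx Hx]] := Hhp j.1 j.2 Hnz (ex_intro _ y (conj Sy Hy)).
  by exists x; split => // y' [Sy' [Hy' _]]; exact: Hx.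
have H2 : exists j y, j \in hs /\ P j y.
  have [y [[j [js Pj]] _]] := dom w0 Sw0.
  by exists j, y.
have [j [x [_ Sx Hx]]] := select (s := hs) (P := P) (Q := fun _ x => S x) (V := fun _ x => F x) H1 H2.
exists x; split => // w Sw.
have [y [[j' [js Pj]] Fy]] := dom w Sw.
exact: le_trans (Hx j' y js Pj) Fy.
Qed.


Definition ET r N (T : {set 'I_r}) (Lm : 'M[R]_(r, N)) : 'M[R]_(r, N) :=
  \matrix_(i, j) (if i \in T then 0 else Lm i j).

Lemma ETE r N (T : {set 'I_r}) (Lm : 'M[R]_(r, N)) (w : 'cV[R]_N) i :
  (ET T Lm *m w) i 0 = if i \in T then 0 else (Lm *m w) i 0.
Proof.
rewrite !mxE /ET; case: ifP => iT.
  by rewrite big1 // => j _; rewrite mxE iT mul0r.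
by apply: eq_bigr => j _; rewrite mxE iT.
Qed.

Definition cost r (lam : 'cV[R]_r) (T : {set 'I_r}) := \sum_i lam i 0 * (i \in T)%:R.

Lemma sparse_min N r (F : 'cV[R]_N -> R) (Om : 'cV[R]_N -> Prop) (Lm : 'M[R]_(r, N))
  (lam : 'cV[R]_r) :
  is_quad F -> is_poly Om -> Om 0 -> (exists L, forall w, Om w -> L <= F w) ->
  (forall i, 0 <= lam i 0) ->
  exists x, Om x /\ forall w, Om w -> F x + Psi0 lam (Lm *m x) <= F w + Psi0 lam (Lm *m w).
Proof.
move=> qF pO O0 [L HL] lam0.
pose ST (T : {set 'I_r}) w := Om w /\ ET T Lm *m w = 0.
have H1 : forall T, T \in enum {set 'I_r} -> (exists y, ST T y) ->
    exists x, ST T x /\ forall y, ST T y -> F x + cost lam T <= F y + cost lam T.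
  move=> T _ ne.
  have [x [Sx Hx]] := qp_min qF (poly_inter pO (poly_eq (ET T Lm) 0)) ne
     (ex_intro _ L (fun w Sw => HL w (proj1 Sw))).
  by exists x; split => // y Sy; rewrite lerD2r; exact: Hx.
have H2 : exists T y, T \in enum {set 'I_r} /\ ST T y.
  by exists setT, 0; rewrite mem_enum; split => //; split => //; rewrite mulmx0.
have [T [x [_ [Ox Ex] Hx]]] := select (s := enum {set 'I_r}) (P := ST) (Q := ST)
   (V := fun T x => F x + cost lam T) H1 H2.
exists x; split => // w Ow.
pose Tw := [set i | (Lm *m w) i 0 != 0].
have STw : ST Tw w.
  split => //; apply/matrixP => i j; rewrite (ord1 j) ETE inE [RHS]mxE.
  by case: ifP => // /negbFE /eqP.
have := Hx Tw w (mem_enum _ _) STw.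
have -> : Psi0 lam (Lm *m w) = cost lam Tw.
  by apply: eq_bigr => i _; rewrite inE.
have : Psi0 lam (Lm *m x) <= cost lam T.
  apply: ler_sum => i _; rewrite ler_wpM2l //.
  case: (boolP (i \in T)) => iT; first by rewrite ler_nat leq_b1.
  have := congr1 (fun M : 'cV[R]_r => M i 0) Ex; rewrite /= ETE (negbTE iT) [RHS]mxE => ->.
  by rewrite eqxx.
move=> h1 h2; lra.
Qed.

End HP.

Section Fin.
Variable R : realType.

Lemma poly_lb k (l : 'cV[R]_k) : is_poly (fun x => vle l x).
Proof.
exists k, (- 1%:M), (- l) => x; rewrite mulNmx mul1mx.
by split=> H i; move: (H i); rewrite !mxE lerN2.
Qed.

Lemma poly_ub k (l : 'cV[R]_k) : is_poly (fun x => vle x l).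
Proof. by exists k, 1%:M, l => x; rewrite mul1mx. Qed.

Lemma poly_ge0 k q (G : 'M[R]_(q, k)) : is_poly (fun x => vle 0 (G *m x)).
Proof.
have [q' [G' [h' H]]] := poly_preimage 0 G (poly_lb (0 : 'cV[R]_q)).
exists q', G', h' => x; rewrite -H add0r; done.
Qed.

Lemma sq_bound k (a y : 'cV[R]_k) : - (2^-1 * sqnorm a) <= 2^-1 * sqnorm y + dotv a y.
Proof.
have := sqnorm_ge0 (y + a); rewrite sqnormD (dotvC y a); lra.
Qed.

Lemma dotv_mono k (u u' g : 'cV[R]_k) : vle u u' -> vle 0 g -> dotv u g <= dotv u' g.
Proof.
move=> H g0; apply: ler_sum => i _; apply: ler_wpM2r; last exact: H.
by have := g0 i; rewrite mxE.
Qed.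

Lemma dotv_ge0 k (u g : 'cV[R]_k) : vle 0 u -> vle 0 g -> 0 <= dotv u g.
Proof. by move=> h1 h2; have := dotv_mono h1 h2; rewrite dotv0l. Qed.

Lemma vpos_le k (p q s : 'cV[R]_k) : vle 0 s -> vle 0 (p + q + s) -> vle (vpos (- p - q)) s.
Proof.
move=> h1 h2 i; move: (h1 i) (h2 i); rewrite !mxE ge_max => a1 a2.
apply/andP; split => //; lra.
Qed.

Lemma vpos_feas k (p q : 'cV[R]_k) : vle 0 (vpos (- p - q)) /\ vle 0 (p + q + vpos (- p - q)).
Proof.
split => i; rewrite !mxE; first by rewrite le_max lexx orbT.
have := le_max (- p i 0 - q i 0) (- p i 0 - q i 0) 0; rewrite lexx /= => h; lra.
Qed.

End Fin.

Unset Implicit Arguments.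

Theorem mainTheorem9 (R : realType) (m n r : nat)
  (A : 'M[R]_(m, n)) (D : 'M[R]_(r, n)) (a : 'cV[R]_m) (lambda mu : 'cV[R]_r)
  (hlam : vlt 0 lambda) (hmu : vlt 0 mu) :
  (* case Omega = {x : 0 <= x <= gamma}, gamma > 0 *)
  (forall gamma : 'cV[R]_n, vlt 0 gamma ->
     has_global_min (fun x : 'cV[R]_n => vle 0 x /\ vle x gamma)
                    (primal_obj A D a lambda)
     /\ has_global_min (fun _ : 'cV[R]_m * 'cV[R]_r => True)
                    (fun yz => dual_obj_box A D a mu gamma yz.1 yz.2))
  /\
  (* case Omega = R^n_+ *)
  (has_global_min (fun x : 'cV[R]_n => vle 0 x) (primal_obj A D a lambda)
   /\ has_global_min (fun yz : 'cV[R]_m * 'cV[R]_r =>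
                        vle 0 (A^T *m yz.1 + D^T *m yz.2))
                    (fun yz => dual_obj_nonneg a mu yz.1 yz.2)).
Proof.
have lam0 : forall i, 0 <= lambda i 0 by move=> i; have := hlam i; rewrite mxE => /ltW.
have mu0 : forall i, 0 <= mu i 0 by move=> i; have := hmu i; rewrite mxE => /ltW.
pose F x := 2^-1 * sqnorm (A *m x - a).
have qF : is_quad F.
  by exists m, A, (- a), 0, 0 => x; rewrite /F /quadf dotv0l !addr0.
have bF : exists L, forall x : 'cV[R]_n, True -> L <= F x.
  by exists 0 => x _; rewrite /F mulr_ge0 ?sqnorm_ge0 // invr_ge0 ler0n.
have primal : forall Om : 'cV[R]_n -> Prop, is_poly Om -> Om 0 ->
    has_global_min Om (primal_obj A D a lambda).
  move=> Om pO O0.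
  have [L HL] := bF.
  have [x [Ox Hx]] := sparse_min D qF pO O0 (ex_intro _ L (fun w _ => HL w I)) lam0.
  by exists x; split => // w Ow; exact: Hx.
split; last split.
- move=> gamma g0; split.
    apply: primal; first exact: poly_inter (poly_lb _) (poly_ub _).
    by split => i; rewrite ?mxE // ltW //; have := g0 i; rewrite mxE.
  pose U : 'M[R]_(m, (m + r) + n) := row_mx (row_mx 1%:M 0) 0.
  pose Lz : 'M[R]_(r, (m + r) + n) := row_mx (row_mx 0 1%:M) 0.
  pose Ls : 'M[R]_(n, (m + r) + n) := row_mx 0 1%:M.
  pose K : 'M[R]_(n, (m + r) + n) := row_mx (row_mx A^T D^T) 1%:M.
  have Uc : forall (y : 'cV[R]_m) (z : 'cV[R]_r) (s : 'cV[R]_n), U *m col_mx (col_mx y z) s = y.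
    by move=> y z s; rewrite /U /Lz /Ls /K !mul_row_col !mul1mx !mul0mx !addr0.
  have Lc : forall (y : 'cV[R]_m) (z : 'cV[R]_r) (s : 'cV[R]_n), Lz *m col_mx (col_mx y z) s = z.
    by move=> y z s; rewrite /U /Lz /Ls /K !mul_row_col !mul1mx !mul0mx !addr0 add0r.
  have Sc : forall (y : 'cV[R]_m) (z : 'cV[R]_r) (s : 'cV[R]_n), Ls *m col_mx (col_mx y z) s = s.
    by move=> y z s; rewrite /U /Lz /Ls /K !mul_row_col !mul1mx !mul0mx add0r.
  have Kc : forall (y : 'cV[R]_m) (z : 'cV[R]_r) (s : 'cV[R]_n), K *m col_mx (col_mx y z) s = A^T *m y + D^T *m z + s.
    by move=> y z s; rewrite /U /Lz /Ls /K !mul_row_col !mul1mx.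
  have gam0 : vle 0 gamma by move=> i; have := g0 i; rewrite !mxE => /ltW.
  pose G w := 2^-1 * sqnorm (U *m w) + dotv a (U *m w) + dotv gamma (Ls *m w).
  have qG : is_quad G.
    exists m, U, 0, (U^T *m a + Ls^T *m gamma), 0 => w.
    by rewrite /G /quadf !addr0 dotvDl -!dotv_mul addrA.
  have pO := poly_inter (poly_ge0 Ls) (poly_ge0 K).
  have O0 : vle 0 (Ls *m 0) /\ vle 0 (K *m 0) by rewrite !mulmx0; split => i.
  have bG : exists L, forall w, (vle 0 (Ls *m w) /\ vle 0 (K *m w)) -> L <= G w.
    exists (- (2^-1 * sqnorm a)) => w [h1 _]; rewrite /G.
    have := sq_bound a (U *m w); have := dotv_ge0 gam0 h1; rewrite dotvC; lra.
  have [x [Ox Hx]] := sparse_min Lz qG pO O0 bG mu0.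
  have [y0 [z0 [s0 Ex]]] : exists y0 z0 s0, x = col_mx (col_mx y0 z0) s0.
    by exists (usubmx (usubmx x)), (dsubmx (usubmx x)), (dsubmx x); rewrite !vsubmxK.
  subst x.
  exists (y0, z0); split => // -[y z] _ /=.
  move: Ox; rewrite Sc Kc => -[Os0 Ks0].
  have [f1 f2] := vpos_feas (A^T *m y) (D^T *m z).
  have := Hx (col_mx (col_mx y z) (vpos (- (A^T *m y) - D^T *m z))).
  rewrite /G !Uc !Lc !Sc !Kc => H.
  have := H (conj f1 f2).
  have := dotv_mono (vpos_le Os0 Ks0) gam0.
  rewrite /dual_obj_box !(dotvC gamma); lra.
- by apply: primal; [exact: poly_lb | move=> i].
- pose U : 'M[R]_(m, m + r) := row_mx 1%:M 0.
  pose Lz : 'M[R]_(r, m + r) := row_mx 0 1%:M.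
  pose K := row_mx A^T D^T.
  have Uc : forall (y : 'cV[R]_m) (z : 'cV[R]_r), U *m col_mx y z = y.
    by move=> y z; rewrite /U /Lz /K mul_row_col mul1mx mul0mx addr0.
  have Lc : forall (y : 'cV[R]_m) (z : 'cV[R]_r), Lz *m col_mx y z = z.
    by move=> y z; rewrite /U /Lz /K mul_row_col mul1mx mul0mx add0r.
  have Kc : forall (y : 'cV[R]_m) (z : 'cV[R]_r), K *m col_mx y z = A^T *m y + D^T *m z.
    by move=> y z; rewrite /U /Lz /K mul_row_col.
  pose G w := 2^-1 * sqnorm (U *m w) + dotv a (U *m w).
  have qG : is_quad G.
    by exists m, U, 0, (U^T *m a), 0 => w; rewrite /G /quadf !addr0 dotv_mul.
  have O0 : vle 0 (K *m 0) by rewrite mulmx0.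
  have bG : exists L, forall w, vle 0 (K *m w) -> L <= G w.
    by exists (- (2^-1 * sqnorm a)) => w _; exact: sq_bound.
  have [x [Ox Hx]] := sparse_min Lz qG (poly_ge0 K) O0 bG mu0.
  have [y0 [z0 Ex]] : exists y0 z0, x = col_mx y0 z0.
    by exists (usubmx x), (dsubmx x); rewrite vsubmxK.
  subst x.
  exists (y0, z0); split; first by move: Ox; rewrite Kc.
  move=> [y z] /= Hyz.
  have := Hx (col_mx y z); rewrite /G !Uc !Lc Kc => H.
  exact: H.
Qed.
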